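(* Fix any reasoning logic. If $c$ is a closed computation with $\vdash c:\underline{C}$ and $c\leadsto c'$, then $\vdash c':\underline{C}$ and $[\![\vdash c:\underline{C}]\!] = [\![\vdash c':\underline{C}]\!]$.
   Context: We work with a fine-grain call-by-value calculus of algebraic effects and handlers, parametrised by a reasoning logic $\mathcal{L}$. Syntax. Values $v ::= x \mid () \mid \mathtt{true} \mid \mathtt{false} \mid \mathtt{fun}\ x \mapsto c \mid \mathtt{handler}\,(\mathtt{return}\ x \mapsto c_r;\ h)$. Computations $c ::= \mathtt{if}\ v\ \mathtt{then}\ c_1\ \mathtt{else}\ c_2 \mid v_1\, v_2 \mid \mathtt{return}\ v \mid \mathit{op}(v; y.c) \mid \mathtt{do}\ x \leftarrow c_1\ \mathtt{in}\ c_2 \mid \mathtt{with}\ v\ \mathtt{handle}\ c$. Operation clauses $h$ are finite sets of clauses $\mathit{op}(x;k) \mapsto c_{\mathit{op}}$, at most one per operation name. Operational semantics: $\leadsto$ is the least relation with: $\mathtt{if}\ \mathtt{true}\ \mathtt{then}\ c_1\ \mathtt{else}\ c_2 \leadsto c_1$; $\mathtt{if}\ \mathtt{false}\ \mathtt{then}\ c_1\ \mathtt{else}\ c_2 \leadsto c_2$; $(\mathtt{fun}\ x\mapsto c)\,v \leadsto c[v/x]$; if $c_1\leadsto c_1'$ then $\mathtt{do}\ x\leftarrow c_1\ \mathtt{in}\ c_2 \leadsto \mathtt{do}\ x\leftarrow c_1'\ \mathtt{in}\ c_2$; $\mathtt{do}\ x\leftarrow \mathtt{return}\ v\ \mathtt{in}\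 c \leadsto c[v/x]$; $\mathtt{do}\ x\leftarrow \mathit{op}(v;y.c_1)\ \mathtt{in}\ c_2 \leadsto \mathit{op}(v;y.\,\mathtt{do}\ x\leftarrow c_1\ \mathtt{in}\ c_2)$; if $c\leadsto c'$ then $\mathtt{with}\ v\ \mathtt{handle}\ c\leadsto \mathtt{with}\ v\ \mathtt{handle}\ c'$; with $H=\mathtt{handler}\,(\mathtt{return}\ x\mapsto c_r;\ h)$: $\mathtt{with}\ H\ \mathtt{handle}\ \mathtt{return}\ v \leadsto c_r[v/x]$, and $\mathtt{with}\ H\ \mathtt{handle}\ \mathit{op}(v;y.c)\leadsto c_{\mathit{op}}[v/x,(\mathtt{fun}\ y\mapsto \mathtt{with}\ H\ \mathtt{handle}\ c)/k]$ when $(\mathit{op}(x;k)\mapsto c_{\mathit{op}})\in h$. Types: $A,B ::= \mathtt{unit}\mid\mathtt{bool}\mid A\to\underline{C}\mid \underline{C}\Rightarrow\underline{D}$; $\underline{C},\underline{D} ::= A\,!\,\Sigma/\mathcal{E}$ with $\Sigma$ a finite set of typed operations $\mathit{op}:A_{\mathit{op}}\to B_{\mathit{op}}$ (distinct names) and $\mathcal{E}$ a finite set of equations between templates (templates $T ::= z(v)\mid \mathtt{if}\ v\ \mathtt{then}\ T_1\ \mathtt{else}\ T_2\mid \mathit{op}(v;y.T)$, typed in a value context and a template context of variables $z:A\to *$, with operations drawn from $\Sigma$). Typing: $\Gamma\vdash x:A$ for $(x:A)\in\Gamma$; $():\mathtt{unit}$; $\mathtt{true},\mathtt{false}:\mathtt{bool}$;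 $\Gamma\vdash \mathtt{fun}\ x\mapsto c:A\to\underline{C}$ if $\Gamma,x:A\vdash c:\underline{C}$; $\Gamma\vdash \mathtt{handler}\,(\mathtt{return}\ x\mapsto c_r;h): A\,!\,\Sigma/\mathcal{E}\Rightarrow\underline{D}$ if $\Gamma,x:A\vdash c_r:\underline{D}$ and $\Gamma\vdash h\models_{\mathcal{E},\Sigma}\underline{D}$; $\mathtt{if}\ v\ \mathtt{then}\ c_1\ \mathtt{else}\ c_2:\underline{C}$ if $v:\mathtt{bool}$, $c_i:\underline{C}$; $v_1\,v_2:\underline{C}$ if $v_1:A\to\underline{C}$, $v_2:A$; $\mathtt{return}\ v:A\,!\,\Sigma/\mathcal{E}$ if $v:A$; $\Gamma\vdash\mathit{op}(v;y.c):A\,!\,\Sigma/\mathcal{E}$ if $(\mathit{op}:A_{\mathit{op}}\to B_{\mathit{op}})\in\Sigma$, $\Gamma\vdash v:A_{\mathit{op}}$, $\Gamma,y:B_{\mathit{op}}\vdash c:A\,!\,\Sigma/\mathcal{E}$; $\Gamma\vdash\mathtt{do}\ x\leftarrow c_1\ \mathtt{in}\ c_2:B\,!\,\Sigma/\mathcal{E}$ if $\Gamma\vdash c_1:A\,!\,\Sigma/\mathcal{E}$, $\Gamma,x:A\vdash c_2:B\,!\,\Sigma/\mathcal{E}$; $\mathtt{with}\ v\ \mathtt{handle}\ c:\underline{D}$ if $v:\underline{C}\Rightarrow\underline{D}$, $c:\underline{C}$. Clauses $\Gamma\vdash h:\Sigma\Rrightarrow\underline{D}$ iff $h$ has exactly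 one clause $\mathit{op}(x;k)\mapsto c_{\mathit{op}}$ for each $\mathit{op}\in\Sigma$ and no others, with $\Gamma,x:A_{\mathit{op}},k:B_{\mathit{op}}\to\underline{D}\vdash c_{\mathit{op}}:\underline{D}$. The judgement $\Gamma\vdash h\models_{\mathcal{E},\Sigma}\underline{D}$ is supplied by the logic and can only hold when $\Gamma\vdash h:\Sigma\Rrightarrow\underline{D}$. Denotational semantics (theories ignored): $[\![\mathtt{unit}]\!]=\{\star\}$, $[\![\mathtt{bool}]\!]=\{\mathrm{ff},\mathrm{tt}\}$, $[\![A\to\underline{C}]\!]$ and $[\![\underline{C}\Rightarrow\underline{D}]\!]$ are the sets of all functions $[\![A]\!]\to[\![\underline{C}]\!]$, resp. $[\![\underline{C}]\!]\to[\![\underline{D}]\!]$, and $[\![A\,!\,\Sigma/\mathcal{E}]\!]=[\![\Sigma]\!][\![A]\!]$, where for a set $X$, $[\![\Sigma]\!]X$ is the inductively defined set with elements $\mathrm{in}_{\mathrm{return}}(a)$, $a\in X$, and $\mathrm{in}_{\mathit{op}}(a;\kappa)$ for $(\mathit{op}:A_{\mathit{op}}\to B_{\mathit{op}})\in\Sigma$, $a\in[\![A_{\mathit{op}}]\!]$, $\kappa:[\![B_{\mathit{op}}]\!]\to[\![\Sigma]\!]X$. An interpretation of $\Sigma$ over a set $Y$ is a family of functions $H_{\mathit{op}}:[\![A_{\mathit{op}}]\!]\times([\![B_{\mathit{op}}]\!]\to Y)\to Y$; the free interpretation $F^X_\Sigma$ over $[\![\Sigma]\!]X$ has $(F^X_\Sigma)_{\mathit{op}}(a,\kappa)=\mathrm{in}_{\mathit{op}}(a;\kappa)$.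 For $f:X\to Y$ the lift $f^\dagger_H:[\![\Sigma]\!]X\to Y$ is given by $f^\dagger_H(\mathrm{in}_{\mathrm{return}}(x))=f(x)$, $f^\dagger_H(\mathrm{in}_{\mathit{op}}(x;\kappa))=H_{\mathit{op}}(x,f^\dagger_H\circ\kappa)$. $[\![\varepsilon]\!]=\{\star\}$, $[\![\Gamma,x:A]\!]=[\![\Gamma]\!]\times[\![A]\!]$. Typed terms denote maps $[\![\Gamma]\!]\to[\![A]\!]$ (resp. $[\![\underline{C}]\!]$): for $\eta\in[\![\Gamma]\!]$, variables are projections; $()\mapsto\star$, $\mathtt{true}\mapsto\mathrm{tt}$, $\mathtt{false}\mapsto\mathrm{ff}$; $[\![\mathtt{fun}\ x\mapsto c]\!]\eta=\lambda a.[\![c]\!](\eta,a)$; $[\![h]\!]\eta$ is the interpretation of $\Sigma$ over $[\![\underline{D}]\!]$ with $([\![h]\!]\eta)_{\mathit{op}}(a,\kappa)=[\![c_{\mathit{op}}]\!](\eta,a,\kappa)$; $[\![\mathtt{handler}\,(\mathtt{return}\ x\mapsto c_r;h)]\!]\eta=(\lambda a.[\![c_r]\!](\eta,a))^\dagger_{[\![h]\!]\eta}$; $[\![\mathtt{if}\ v\ \mathtt{then}\ c_1\ \mathtt{else}\ c_2]\!]\eta$ is $[\![c_1]\!]\eta$ if $[\![v]\!]\eta=\mathrm{tt}$ and $[\![c_2]\!]\eta$ if it is $\mathrm{ff}$; $[\![v_1\,v_2]\!]\eta=([\![v_1]\!]\eta)([\![v_2]\!]\eta)$; $[\![\mathtt{return}\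 v]\!]\eta=\mathrm{in}_{\mathrm{return}}([\![v]\!]\eta)$; $[\![\mathit{op}(v;y.c)]\!]\eta=\mathrm{in}_{\mathit{op}}([\![v]\!]\eta;\lambda b.[\![c]\!](\eta,b))$; for $c_1:A\,!\,\Sigma/\mathcal{E}$ and $c_2:B\,!\,\Sigma/\mathcal{E}$, $[\![\mathtt{do}\ x\leftarrow c_1\ \mathtt{in}\ c_2]\!]\eta=(\lambda a.[\![c_2]\!](\eta,a))^\dagger_{F^{[\![B]\!]}_\Sigma}([\![c_1]\!]\eta)$; $[\![\mathtt{with}\ v\ \mathtt{handle}\ c]\!]\eta=([\![v]\!]\eta)([\![c]\!]\eta)$. For closed terms the denotation is identified with its value at $\star$.
   Formalization: The reasoning logic's judgement $\Gamma\vdash h\models_{\mathcal{E},\Sigma}\underline{D}$ is moreover closed under weakening, adding a variable to Γ, and under substitution of a closed well-typed value for a variable of Γ. The statement above fails without it. *)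

(* Defs.v *)
(* Fine-grain CBV calculus of algebraic effects and handlers,
   parametrised by a reasoning logic.  Variables are de Bruijn indices
   (index 0 = innermost binder). *)
From Stdlib Require Import List Arith.
Import ListNotations.

Set Implicit Arguments.

Definition opname := nat.

Inductive value : Type :=
| VVar (n : nat)
| VUnit
| VTrue
| VFalse
| VFun (c : comp)                       (* fun x |-> c ; c binds x *)
| VHandler (cr : comp) (h : clauses)    (* handler (return x |-> cr; h) *)
with comp : Type :=
| CIf (v : value) (c1 c2 : comp)
| CApp (v1 v2 : value)
| CRet (v : value)
| COp (op : opname) (v : value) (c : comp)   (* op(v; y.c) ; c binds y *)
| CDo (c1 c2 : comp)                          (* do x <- c1 in c2 ; c2 binds x *)
| CWith (v : value) (c : comp)
with clauses : Type :=
| HNil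
| HCons (op : opname) (c : comp) (h : clauses).
(* a clause op(x;k) |-> c : in c, k is index 0 and x is index 1 *)

Fixpoint clause_names (h : clauses) : list opname :=
  match h with HNil => [] | HCons o _ h' => o :: clause_names h' end.

Fixpoint clause_lookup (h : clauses) (o : opname) : option comp :=
  match h with
  | HNil => None
  | HCons o' c h' => if Nat.eqb o o' then Some c else clause_lookup h' o
  end.

Fixpoint clause_in (o : opname) (c : comp) (h : clauses) : Prop :=
  match h with
  | HNil => False
  | HCons o' c' h' => (o = o' /\ c = c') \/ clause_in o c h'
  end.

(* Templates (values inside are in the template's own value context) *)

Inductive template : Type :=
| TApp (z : nat) (v : value)
| TIf (v : value) (T1 T2 : template)
| TOp (op : opname) (v : value) (T : template).    (* op(v; y.T), binds y *)

Inductive vtype : Type :=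
| TUnit
| TBool
| TFun (A : vtype) (C : ctype)
| THandler (C D : ctype)
with ctype : Type :=
| CT (A : vtype) (S : sig) (E : eqs)
with sig : Type :=
| SNil
| SCons (op : opname) (Aop Bop : vtype) (S : sig)
with eqs : Type :=
| ENil
| ECons (Delta : list vtype) (Z : list vtype) (T1 T2 : template) (E : eqs).
(* An equation (Delta ; Z |- T1 = T2): Delta is the value context,
   Z lists the argument types A of the template variables z : A -> * . *)

Fixpoint sig_names (S : sig) : list opname :=
  match S with SNil => [] | SCons o _ _ S' => o :: sig_names S' end.

(* (op : A -> B) \in Sigma  (first occurrence of the name) *)
Inductive sig_has : sig -> opname -> vtype -> vtype -> Type :=
| sh_here : forall o A B S, sig_has (SCons o A B S) o A B
| sh_there : forall o A B o' A' B' S,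
    Nat.eqb o o' = false -> sig_has S o A B -> sig_has (SCons o' A' B' S) o A B.

Definition ctx := list vtype.

Inductive var_in : ctx -> nat -> vtype -> Type :=
| vi_here : forall A G, var_in (A :: G) 0 A
| vi_there : forall A B G n, var_in G n A -> var_in (B :: G) (S n) A.

Fixpoint shift_v (k : nat) (v : value) : value :=
  match v with
  | VVar n => if Nat.ltb n k then VVar n else VVar (S n)
  | VUnit => VUnit
  | VTrue => VTrue
  | VFalse => VFalse
  | VFun c => VFun (shift_c (S k) c)
  | VHandler cr h => VHandler (shift_c (S k) cr) (shift_h (S (S k)) h)
  end
with shift_c (k : nat) (c : comp) : comp :=
  match c with
  | CIf v c1 c2 => CIf (shift_v k v) (shift_c k c1) (shift_c k c2)
  | CApp v1 v2 => CApp (shift_v k v1) (shift_v k v2)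
  | CRet v => CRet (shift_v k v)
  | COp o v c => COp o (shift_v k v) (shift_c (S k) c)
  | CDo c1 c2 => CDo (shift_c k c1) (shift_c (S k) c2)
  | CWith v c => CWith (shift_v k v) (shift_c k c)
  end
with shift_h (k : nat) (h : clauses) : clauses :=
  match h with
  | HNil => HNil
  | HCons o c h' => HCons o (shift_c k c) (shift_h k h')
  end.

(* subst_v k u t : replace variable k by u (u lives in the context of t with
   variable k removed), decrementing the variables above k. *)
Fixpoint subst_v (k : nat) (u : value) (v : value) : value :=
  match v with
  | VVar n => if Nat.ltb n k then VVar n
              else if Nat.eqb n k then u else VVar (pred n)
  | VUnit => VUnit
  | VTrue => VTrue
  | VFalse => VFalse
  | VFun c => VFun (subst_c (S k) (shift_v 0 u) c)
  | VHandler cr h =>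
      VHandler (subst_c (S k) (shift_v 0 u) cr)
               (subst_h (S (S k)) (shift_v 0 (shift_v 0 u)) h)
  end
with subst_c (k : nat) (u : value) (c : comp) : comp :=
  match c with
  | CIf v c1 c2 => CIf (subst_v k u v) (subst_c k u c1) (subst_c k u c2)
  | CApp v1 v2 => CApp (subst_v k u v1) (subst_v k u v2)
  | CRet v => CRet (subst_v k u v)
  | COp o v c => COp o (subst_v k u v) (subst_c (S k) (shift_v 0 u) c)
  | CDo c1 c2 => CDo (subst_c k u c1) (subst_c (S k) (shift_v 0 u) c2)
  | CWith v c => CWith (subst_v k u v) (subst_c k u c)
  end
with subst_h (k : nat) (u : value) (h : clauses) : clauses :=
  match h with
  | HNil => HNil
  | HCons o c h' => HCons o (subst_c k u c) (subst_h k u h')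
  end.

(* the same operations on a set of clauses, seen at the level of the
   context in which the handler lives (clause bodies bind x and k) *)
Definition shift_clauses (k : nat) (h : clauses) : clauses :=
  shift_h (S (S k)) h.
Definition subst_clauses (k : nat) (u : value) (h : clauses) : clauses :=
  subst_h (S (S k)) (shift_v 0 (shift_v 0 u)) h.

Inductive step : comp -> comp -> Prop :=
| st_if_true : forall c1 c2, step (CIf VTrue c1 c2) c1
| st_if_false : forall c1 c2, step (CIf VFalse c1 c2) c2
| st_app : forall c v, step (CApp (VFun c) v) (subst_c 0 v c)
| st_do : forall c1 c1' c2, step c1 c1' -> step (CDo c1 c2) (CDo c1' c2)
| st_do_ret : forall v c, step (CDo (CRet v) c) (subst_c 0 v c)
| st_do_op : forall o v c1 c2,
    step (CDo (COp o v c1) c2) (COp o v (CDo c1 (shift_c 1 c2)))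
| st_with : forall v c c', step c c' -> step (CWith v c) (CWith v c')
| st_with_ret : forall cr h v,
    step (CWith (VHandler cr h) (CRet v)) (subst_c 0 v cr)
| st_with_op : forall cr h o v c cop,
    clause_in o cop h ->
    step (CWith (VHandler cr h) (COp o v c))
         (subst_c 0 v
            (subst_c 0 (shift_v 0 (VFun (CWith (shift_v 0 (VHandler cr h)) c)))
               cop)).

(* Typing, parametrised by the logic's judgement  G |- h |=_{E,Sigma} D *)

Definition models_t : Type := ctx -> clauses -> eqs -> sig -> ctype -> Prop.

Inductive has_v (m : models_t) : ctx -> value -> vtype -> Type :=
| tv_var : forall G n A, var_in G n A -> has_v m G (VVar n) A
| tv_unit : forall G, has_v m G VUnit TUnit
| tv_true : forall G, has_v m G VTrue TBool
| tv_false : forall G, has_v m G VFalse TBool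
| tv_fun : forall G c A C, has_c m (A :: G) c C -> has_v m G (VFun c) (TFun A C)
| tv_handler : forall G cr h A S E D,
    has_c m (A :: G) cr D ->
    cover m G h S D ->
    NoDup (clause_names h) ->
    (forall o, In o (clause_names h) -> In o (sig_names S)) ->
    m G h E S D ->
    has_v m G (VHandler cr h) (THandler (CT A S E) D)
with has_c (m : models_t) : ctx -> comp -> ctype -> Type :=
| tc_if : forall G v c1 c2 C,
    has_v m G v TBool -> has_c m G c1 C -> has_c m G c2 C ->
    has_c m G (CIf v c1 c2) C
| tc_app : forall G v1 v2 A C,
    has_v m G v1 (TFun A C) -> has_v m G v2 A -> has_c m G (CApp v1 v2) C
| tc_ret : forall G v A S E, has_v m G v A -> has_c m G (CRet v) (CT A S E)
| tc_op : forall G o v c Aop Bop A S E,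
    sig_has S o Aop Bop -> has_v m G v Aop ->
    has_c m (Bop :: G) c (CT A S E) ->
    has_c m G (COp o v c) (CT A S E)
| tc_do : forall G c1 c2 A B S E,
    has_c m G c1 (CT A S E) -> has_c m (A :: G) c2 (CT B S E) ->
    has_c m G (CDo c1 c2) (CT B S E)
| tc_with : forall G v c C D,
    has_v m G v (THandler C D) -> has_c m G c C -> has_c m G (CWith v c) D
with cover (m : models_t) : ctx -> clauses -> sig -> ctype -> Type :=
| cov_nil : forall G h D, cover m G h SNil D
| cov_cons : forall G h o Aop Bop S D c,
    clause_lookup h o = Some c ->
    has_c m (TFun Bop D :: Aop :: G) c D ->
    cover m G h S D ->
    cover m G h (SCons o Aop Bop S) D.

Definition clauses_typed (m : models_t) (G : ctx) (h : clauses) (S : sig)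
  (D : ctype) : Type :=
  (cover m G h S D * (NoDup (clause_names h) /\
     (forall o, In o (clause_names h) -> In o (sig_names S))))%type.

(* A reasoning logic: its judgement can only hold for well-typed clauses, and
   it is closed under the structural rules (weakening, substitution of closed
   values) that the syntactic manipulations of the operational semantics need. *)
Record Logic : Type := {
  lmodels : models_t;
  lmodels_typed : forall G h E S D,
    lmodels G h E S D -> inhabited (clauses_typed lmodels G h S D);
  lmodels_weaken : forall G1 G2 B h E S D,
    lmodels (G1 ++ G2) h E S D ->
    lmodels (G1 ++ B :: G2) (shift_clauses (length G1) h) E S D;
  lmodels_subst : forall G1 G2 A v h E S D,
    has_v lmodels [] v A ->
    lmodels (G1 ++ A :: G2) h E S D ->
    lmodels (G1 ++ G2) (subst_clauses (length G1) v h) E S D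
}.

(* Denotational semantics (theories ignored) *)

(* [[Sigma]]X : free trees; nodes labelled by operation names *)
Inductive tree (P Q : opname -> Type) (X : Type) : Type :=
| in_return (x : X)
| in_op (o : opname) (a : P o) (k : Q o -> tree P Q X).
Arguments in_return {P Q X} x.
Arguments in_op {P Q X} o a k.

Fixpoint lift {P Q : opname -> Type} {X Y : Type} (f : X -> Y)
  (H : forall o, P o -> (Q o -> Y) -> Y) (t : tree P Q X) : Y :=
  match t with
  | in_return x => f x
  | in_op o a k => H o a (fun b => lift f H (k b))
  end.

Fixpoint sem_v (A : vtype) : Type :=
  match A with
  | TUnit => unit
  | TBool => bool
  | TFun A C => sem_v A -> sem_c C
  | THandler C D => sem_c C -> sem_c D
  end
with sem_c (C : ctype) : Type :=
  match C with
  | CT A Sg _ => tree (sem_arg Sg) (sem_res Sg) (sem_v A)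
  end
with sem_arg (Sg : sig) (o : opname) : Type :=
  match Sg with
  | SNil => Empty_set
  | SCons o' A _ Sg' => if Nat.eqb o o' then sem_v A else sem_arg Sg' o
  end
with sem_res (Sg : sig) (o : opname) : Type :=
  match Sg with
  | SNil => unit
  | SCons o' _ B Sg' => if Nat.eqb o o' then sem_v B else sem_res Sg' o
  end.

Fixpoint sem_ctx (G : ctx) : Type :=
  match G with
  | [] => unit
  | A :: G' => (sem_ctx G' * sem_v A)%type
  end.

Fixpoint den_var G n A (x : var_in G n A) : sem_ctx G -> sem_v A :=
  match x in var_in G n A return sem_ctx G -> sem_v A with
  | vi_here _ _ => fun eta => snd eta
  | vi_there _ x' => fun eta => den_var x' (fst eta)
  end.

Fixpoint arg_in Sg o A B (p : sig_has Sg o A B) : sem_v A -> sem_arg Sg o :=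
  match p in sig_has Sg o A B return sem_v A -> sem_arg Sg o with
  | @sh_here o A B Sg => fun a =>
      @eq_rect_r bool true (fun b : bool => if b then sem_v A else sem_arg Sg o) a
        (Nat.eqb o o) (Nat.eqb_refl o)
  | @sh_there o A B o' A' B' Sg ne p' => fun a =>
      @eq_rect_r bool false (fun b : bool => if b then sem_v A' else sem_arg Sg o)
        (arg_in p' a) (Nat.eqb o o') ne
  end.

Fixpoint res_out Sg o A B (p : sig_has Sg o A B) : sem_res Sg o -> sem_v B :=
  match p in sig_has Sg o A B return sem_res Sg o -> sem_v B with
  | @sh_here o A B Sg => fun r =>
      eq_rect (Nat.eqb o o) (fun b : bool => if b then sem_v B else sem_res Sg o) r
        true (Nat.eqb_refl o)
  | @sh_there o A B o' A' B' Sg ne p' => fun r =>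
      res_out p' (eq_rect (Nat.eqb o o') (fun b : bool => if b then sem_v B' else sem_res Sg o)
                    r false ne)
  end.

Fixpoint den_v m G v A (d : has_v m G v A) {struct d} : sem_ctx G -> sem_v A :=
  match d in has_v _ G v A return sem_ctx G -> sem_v A with
  | @tv_var _ G n A x => den_var x
  | @tv_unit _ G => fun _ => tt
  | @tv_true _ G => fun _ => true
  | @tv_false _ G => fun _ => false
  | @tv_fun _ G c A C dc => fun eta => fun a => den_c dc (eta, a)
  | @tv_handler _ G cr h A Sg E D dcr dh _ _ _ => fun eta =>
      lift (fun a => den_c dcr (eta, a)) (den_h dh eta)
  end
with den_c m G c C (d : has_c m G c C) {struct d} : sem_ctx G -> sem_c C :=
  match d in has_c _ G c C return sem_ctx G -> sem_c C with
  | @tc_if _ G v c1 c2 C dv d1 d2 => fun eta =>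
      if den_v dv eta then den_c d1 eta else den_c d2 eta
  | @tc_app _ G v1 v2 A C d1 d2 => fun eta => (den_v d1 eta) (den_v d2 eta)
  | @tc_ret _ G v A Sg E dv => fun eta => in_return (den_v dv eta)
  | @tc_op _ G o v c Aop Bop A Sg E p dv dc => fun eta =>
      in_op o (arg_in p (den_v dv eta)) (fun b => den_c dc (eta, res_out p b))
  | @tc_do _ G c1 c2 A B Sg E d1 d2 => fun eta =>
      lift (fun a => den_c d2 (eta, a)) (fun o a k => in_op o a k) (den_c d1 eta)
  | @tc_with _ G v c C D dv dc => fun eta => (den_v dv eta) (den_c dc eta)
  end
with den_h m G h Sg D (d : cover m G h Sg D) {struct d} :
  sem_ctx G -> forall o, sem_arg Sg o -> (sem_res Sg o -> sem_c D) -> sem_c D :=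
  match d in cover _ G h Sg D
    return sem_ctx G -> forall o, sem_arg Sg o -> (sem_res Sg o -> sem_c D) -> sem_c D
  with
  | @cov_nil _ G h D => fun _ o a _ => match a with end
  | @cov_cons _ G h o' Aop Bop Sg D c _ dc dS => fun eta o =>
      match Nat.eqb o o' as b
        return (if b then sem_v Aop else sem_arg Sg o) ->
               ((if b then sem_v Bop else sem_res Sg o) -> sem_c D) -> sem_c D with
      | true => fun a k => den_c dc ((eta, a), k)
      | false => fun a k => den_h dS eta o a k
      end
  end.

(* Main.v *)
Require Import Defs.
From Stdlib Require Import List Arith Lia.
From Stdlib Require Import Program.Equality FunctionalExtensionality.
Import ListNotations.


Scheme has_v_rect' := Induction for has_v Sort Type
with has_c_rect' := Induction for has_c Sort Type
with cover_rect' := Induction for cover Sort Type.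

Scheme has_v_ind' := Induction for has_v Sort Prop
with has_c_ind' := Induction for has_c Sort Prop
with cover_ind' := Induction for cover Sort Prop.

Lemma names_shift k h : clause_names (shift_h k h) = clause_names h.
Proof. induction h; simpl; congruence. Qed.
Lemma names_subst k u h : clause_names (subst_h k u h) = clause_names h.
Proof. induction h; simpl; congruence. Qed.
Lemma lookup_shift k h o : clause_lookup (shift_h k h) o = option_map (shift_c k) (clause_lookup h o).
Proof. induction h; simpl; auto. destruct (Nat.eqb o op); auto. Qed.
Lemma lookup_subst k u h o : clause_lookup (subst_h k u h) o = option_map (subst_c k u) (clause_lookup h o).
Proof. induction h; simpl; auto. destruct (Nat.eqb o op); auto. Qed.

Lemma clause_in_names o c h : clause_in o c h -> In o (clause_names h).
Proof. induction h; simpl; intuition. Qed.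

Lemma clause_in_lookup o c h : clause_in o c h -> NoDup (clause_names h) -> clause_lookup h o = Some c.
Proof.
  induction h; simpl; intros Hi Hn; [contradiction|].
  inversion Hn; subst.
  destruct Hi as [[-> ->]|Hi].
  - rewrite Nat.eqb_refl; reflexivity.
  - destruct (Nat.eqb_spec o op); [subst; exfalso; apply H1; eapply clause_in_names; eauto|].
    auto.
Qed.

Lemma shift_h_id k h : (forall o c, clause_in o c h -> shift_c k c = c) -> shift_h k h = h.
Proof.
  induction h; simpl; intros H; auto.
  rewrite (H op c) by auto. rewrite IHh; auto. intros o0 c0 Hc0; apply (H o0 c0); auto.
Qed.

Lemma var_in_lt G n A (x : var_in G n A) : n < length G.
Proof. induction x; simpl; lia. Qed.

Lemma closed_c (m : models_t) :
  forall G c C (d : has_c m G c C), forall k, length G <= k -> shift_c k c = c.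
Proof.
  apply (has_c_ind' m
    (fun G v A _ => forall k, length G <= k -> shift_v k v = v)
    (fun G c C _ => forall k, length G <= k -> shift_c k c = c)
    (fun G h S D _ => forall o c, clause_lookup h o = Some c -> In o (sig_names S) ->
        forall k, Datatypes.S (Datatypes.S (length G)) <= k -> shift_c k c = c));
  simpl; intros; auto.
  - apply var_in_lt in v. destruct (Nat.ltb_spec n k); auto; lia.
  - rewrite H; auto; simpl; lia.
  - rewrite H by (simpl; lia). f_equal. apply shift_h_id. intros o c0 Hi.
    apply (H0 o c0); [apply clause_in_lookup; auto | apply i; eapply clause_in_names; eauto | lia].
  - rewrite H, H0, H1; auto.
  - rewrite H, H0; auto.
  - rewrite H; auto.
  - rewrite H, H0 by (simpl; lia); auto.
  - rewrite H, H0 by (simpl; lia); auto.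
  - rewrite H, H0; auto.
  - contradiction.
  - destruct (Nat.eqb_spec o0 o).
    + subst. rewrite e in H1. injection H1 as <-. apply H; lia.
    + destruct H2 as [->|H2]; [congruence|]. eapply H0; eauto.
Qed.

Lemma closed_v (m : models_t) :
  forall G v A (d : has_v m G v A), forall k, length G <= k -> shift_v k v = v.
Proof.
  intros G v A d k Hk.
  pose proof (@closed_c m _ _ _ (tc_ret SNil ENil d) k Hk) as H. simpl in H. congruence.
Qed.

Fixpoint ins (G1 G2 : ctx) (B : vtype) {struct G1} :
  sem_ctx (G1 ++ G2) -> sem_v B -> sem_ctx (G1 ++ B :: G2) :=
  match G1 as G1 return sem_ctx (G1 ++ G2) -> sem_v B -> sem_ctx (G1 ++ B :: G2) with
  | [] => fun eta b => (eta, b)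
  | A :: G1' => fun eta b => (ins G1' G2 B (fst eta) b, snd eta)
  end.

Lemma var_weak : forall G1 G2 B n A (x : var_in (G1 ++ G2) n A),
  {m : nat & {y : var_in (G1 ++ B :: G2) m A |
     shift_v (length G1) (VVar n) = VVar m /\
     forall eta b, den_var y (ins G1 G2 B eta b) = den_var x eta}}.
Proof.
  induction G1 as [|C G1 IH]; intros G2 B n A x.
  - exists (S n), (vi_there _ x). simpl. split; reflexivity.
  - simpl in x. dependent destruction x.
    + exists 0, (vi_here _ _). simpl. split; reflexivity.
    + destruct (IH G2 B n A x) as [m [y [Heq Hd]]].
      exists (S m), (vi_there _ y). split.
      * simpl in *. change (S n <? S (length G1)) with (n <? length G1).
        destruct (n <? length G1); injection Heq as <-; reflexivity.
      * intros eta b. simpl. apply Hd.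
Qed.

Lemma var_subst : forall G1 G2 T n A (x : var_in (G1 ++ T :: G2) n A),
  ({e : A = T | n = length G1 /\
      forall eta b, den_var x (ins G1 G2 T eta b) = eq_rect_r sem_v b e}
  + {m : nat & {y : var_in (G1 ++ G2) m A |
      n <> length G1 /\ m = (if n <? length G1 then n else pred n) /\
      forall eta b, den_var x (ins G1 G2 T eta b) = den_var y eta}})%type.
Proof.
  induction G1 as [|C G1 IH]; intros G2 T n A x.
  - simpl in x. dependent destruction x.
    + left. exists eq_refl. split; reflexivity.
    + right. exists n, x. simpl. split; [lia| split; reflexivity].
  - simpl in x. dependent destruction x.
    + right. exists 0, (vi_here _ _). simpl. split; [lia | split; reflexivity].
    + destruct (IH G2 T n A x) as [[e [Hn Hd]] | [m [y [Hn [Hm Hd]]]]].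
      * left. exists e. split; [simpl; lia|]. intros eta b. apply Hd.
      * right. exists (S m), (vi_there _ y). split; [simpl; lia|]. split.
        -- simpl. change (S n <? S (length G1)) with (n <? length G1).
           subst m. destruct (Nat.ltb_spec n (length G1)); lia.
        -- intros eta b. apply Hd.
Qed.

Definition Wv (L : Logic) (B : vtype) G v A (d : has_v (lmodels L) G v A) : Type :=
  forall G1 G2 (e : G = G1 ++ G2),
  {d' : has_v (lmodels L) (G1 ++ B :: G2) (shift_v (length G1) v) A |
    forall eta b, den_v d' (ins G1 G2 B eta b) = den_v d (eq_rect_r sem_ctx eta e)}.
Definition Wc (L : Logic) (B : vtype) G c C (d : has_c (lmodels L) G c C) : Type :=
  forall G1 G2 (e : G = G1 ++ G2),
  {d' : has_c (lmodels L) (G1 ++ B :: G2) (shift_c (length G1) c) C |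
    forall eta b, den_c d' (ins G1 G2 B eta b) = den_c d (eq_rect_r sem_ctx eta e)}.
Definition Wh (L : Logic) (B : vtype) G h S D (d : cover (lmodels L) G h S D) : Type :=
  forall G1 G2 (e : G = G1 ++ G2),
  {d' : cover (lmodels L) (G1 ++ B :: G2) (shift_h (Datatypes.S (Datatypes.S (length G1))) h) S D |
    forall eta b o a k, den_h d' (ins G1 G2 B eta b) o a k = den_h d (eq_rect_r sem_ctx eta e) o a k}.

Ltac fin := unfold eq_rect_r in *; simpl in *.
Lemma weak_all (L : Logic) (B : vtype) :
  forall G c C (d : has_c (lmodels L) G c C), Wc L B G c C d.
Proof.
  apply (has_c_rect' (lmodels L) (Wv L B) (Wc L B) (Wh L B)); unfold Wv, Wc, Wh.
  - intros G n A v G1 G2 e; subst; fin.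
    destruct (var_weak G1 G2 B _ _ v) as [m [y [Heq Hd]]]. simpl in Heq. rewrite Heq.
    exists (tv_var _ y). intros; apply Hd.
  - intros G G1 G2 e; subst; fin. exists (tv_unit _ _); reflexivity.
  - intros G G1 G2 e; subst; fin. exists (tv_true _ _); reflexivity.
  - intros G G1 G2 e; subst; fin. exists (tv_false _ _); reflexivity.
  - intros G c A C dc IH G1 G2 e; subst; fin.
    destruct (IH (A :: G1) G2 eq_refl) as [d1 H1]. exists (tv_fun d1). intros eta b.
    simpl. apply functional_extensionality. intro a. apply (H1 (eta, a) b).
  - intros G cr h A Sg E D dcr IH1 dcov IH2 nd0 inc0 l G1 G2 e; subst; fin.
    destruct (IH1 (A :: G1) G2 eq_refl) as [d1 H1]. destruct (IH2 G1 G2 eq_refl) as [d2 H2].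
    assert (nd : NoDup (clause_names (shift_h (S (S (length G1))) h))) by (rewrite names_shift; auto).
    assert (inc : forall o, In o (clause_names (shift_h (S (S (length G1))) h)) -> In o (sig_names Sg))
      by (rewrite names_shift; auto).
    pose proof (lmodels_weaken L G1 G2 B h E Sg D l) as mw.
    exists (tv_handler E d1 d2 nd inc mw). intros eta b. simpl. f_equal.
    + apply functional_extensionality. intro a. apply (H1 (eta, a) b).
    + apply functional_extensionality_dep; intro o.
      apply functional_extensionality; intro a.
      apply functional_extensionality; intro k. apply H2.
  - intros G v c1 c2 C dv IH dc1 IH1 dc2 IH2 G1 G2 e; subst; fin.
    destruct (IH G1 G2 eq_refl) as [d1 H1]. destruct (IH1 G1 G2 eq_refl) as [d2 H2].
    destruct (IH2 G1 G2 eq_refl) as [d3 H3].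
    exists (tc_if d1 d2 d3). intros eta b. simpl. rewrite H1, H2, H3. reflexivity.
  - intros G v1 v2 A C dv1 IH1 dv2 IH2 G1 G2 e; subst; fin.
    destruct (IH1 G1 G2 eq_refl) as [d1 H1]. destruct (IH2 G1 G2 eq_refl) as [d2 H2].
    exists (tc_app d1 d2). intros eta b. simpl. rewrite H1, H2. reflexivity.
  - intros G v A S E dv IH G1 G2 e; subst; fin.
    destruct (IH G1 G2 eq_refl) as [d1 H1].
    exists (tc_ret S E d1). intros eta b. simpl. rewrite H1. reflexivity.
  - intros G o v c Aop Bop A S E s dv IH1 dc IH2 G1 G2 e; subst; fin.
    destruct (IH1 G1 G2 eq_refl) as [d1 H1]. destruct (IH2 (Bop :: G1) G2 eq_refl) as [d2 H2].
    exists (tc_op s d1 d2). intros eta b. simpl. rewrite H1. f_equal.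
    apply functional_extensionality. intro r. apply (H2 (eta, _) b).
  - intros G c1 c2 A B0 S E dc1 IH1 dc2 IH2 G1 G2 e; subst; fin.
    destruct (IH1 G1 G2 eq_refl) as [d1 H1]. destruct (IH2 (A :: G1) G2 eq_refl) as [d2 H2].
    exists (tc_do d1 d2). intros eta b. simpl. rewrite H1. f_equal.
    apply functional_extensionality. intro r. apply (H2 (eta, _) b).
  - intros G v c C D dv IH1 dc IH2 G1 G2 e; subst; fin.
    destruct (IH1 G1 G2 eq_refl) as [d1 H1]. destruct (IH2 G1 G2 eq_refl) as [d2 H2].
    exists (tc_with d1 d2). intros eta b. simpl. rewrite H1, H2. reflexivity.
  - intros G h D G1 G2 e; subst; fin.
    exists (cov_nil _ _ _ _). intros. destruct a.
  - intros G h o Aop Bop Sg D c e0 dc IH1 dcov IH2 G1 G2 e; subst; fin.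
    destruct (IH1 (TFun Bop D :: Aop :: G1) G2 eq_refl) as [d1 H1].
    destruct (IH2 G1 G2 eq_refl) as [d2 H2].
    assert (el : clause_lookup (shift_h (S (S (length G1))) h) o = Some (shift_c (S (S (length G1))) c))
      by (rewrite lookup_shift, e0; reflexivity).
    exists (cov_cons o el d1 d2). intros eta b o0. simpl.
    destruct (o0 =? o); intros a k.
    + apply (H1 (eta, a, k) b).
    + apply H2.
Qed.

Lemma weak_v (L : Logic) (B : vtype) :
  forall G v A (d : has_v (lmodels L) G v A), Wv L B G v A d.
Proof.
  apply (has_v_rect' (lmodels L) (Wv L B) (Wc L B) (Wh L B)); unfold Wv, Wc, Wh.
  - intros G n A v G1 G2 e; subst; fin.
    destruct (var_weak G1 G2 B _ _ v) as [m [y [Heq Hd]]]. simpl in Heq. rewrite Heq.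
    exists (tv_var _ y). intros; apply Hd.
  - intros G G1 G2 e; subst; fin. exists (tv_unit _ _); reflexivity.
  - intros G G1 G2 e; subst; fin. exists (tv_true _ _); reflexivity.
  - intros G G1 G2 e; subst; fin. exists (tv_false _ _); reflexivity.
  - intros G c A C dc IH G1 G2 e; subst; fin.
    destruct (IH (A :: G1) G2 eq_refl) as [d1 H1]. exists (tv_fun d1). intros eta b.
    simpl. apply functional_extensionality. intro a. apply (H1 (eta, a) b).
  - intros G cr h A Sg E D dcr IH1 dcov IH2 nd0 inc0 l G1 G2 e; subst; fin.
    destruct (IH1 (A :: G1) G2 eq_refl) as [d1 H1]. destruct (IH2 G1 G2 eq_refl) as [d2 H2].
    assert (nd : NoDup (clause_names (shift_h (S (S (length G1))) h))) by (rewrite names_shift; auto).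
    assert (inc : forall o, In o (clause_names (shift_h (S (S (length G1))) h)) -> In o (sig_names Sg))
      by (rewrite names_shift; auto).
    pose proof (lmodels_weaken L G1 G2 B h E Sg D l) as mw.
    exists (tv_handler E d1 d2 nd inc mw). intros eta b. simpl. f_equal.
    + apply functional_extensionality. intro a. apply (H1 (eta, a) b).
    + apply functional_extensionality_dep; intro o.
      apply functional_extensionality; intro a.
      apply functional_extensionality; intro k. apply H2.
  - intros G v c1 c2 C dv IH dc1 IH1 dc2 IH2 G1 G2 e; subst; fin.
    destruct (IH G1 G2 eq_refl) as [d1 H1]. destruct (IH1 G1 G2 eq_refl) as [d2 H2].
    destruct (IH2 G1 G2 eq_refl) as [d3 H3].
    exists (tc_if d1 d2 d3). intros eta b. simpl. rewrite H1, H2, H3. reflexivity.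
  - intros G v1 v2 A C dv1 IH1 dv2 IH2 G1 G2 e; subst; fin.
    destruct (IH1 G1 G2 eq_refl) as [d1 H1]. destruct (IH2 G1 G2 eq_refl) as [d2 H2].
    exists (tc_app d1 d2). intros eta b. simpl. rewrite H1, H2. reflexivity.
  - intros G v A S E dv IH G1 G2 e; subst; fin.
    destruct (IH G1 G2 eq_refl) as [d1 H1].
    exists (tc_ret S E d1). intros eta b. simpl. rewrite H1. reflexivity.
  - intros G o v c Aop Bop A S E s dv IH1 dc IH2 G1 G2 e; subst; fin.
    destruct (IH1 G1 G2 eq_refl) as [d1 H1]. destruct (IH2 (Bop :: G1) G2 eq_refl) as [d2 H2].
    exists (tc_op s d1 d2). intros eta b. simpl. rewrite H1. f_equal.
    apply functional_extensionality. intro r. apply (H2 (eta, _) b).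
  - intros G c1 c2 A B0 S E dc1 IH1 dc2 IH2 G1 G2 e; subst; fin.
    destruct (IH1 G1 G2 eq_refl) as [d1 H1]. destruct (IH2 (A :: G1) G2 eq_refl) as [d2 H2].
    exists (tc_do d1 d2). intros eta b. simpl. rewrite H1. f_equal.
    apply functional_extensionality. intro r. apply (H2 (eta, _) b).
  - intros G v c C D dv IH1 dc IH2 G1 G2 e; subst; fin.
    destruct (IH1 G1 G2 eq_refl) as [d1 H1]. destruct (IH2 G1 G2 eq_refl) as [d2 H2].
    exists (tc_with d1 d2). intros eta b. simpl. rewrite H1, H2. reflexivity.
  - intros G h D G1 G2 e; subst; fin.
    exists (cov_nil _ _ _ _). intros. destruct a.
  - intros G h o Aop Bop Sg D c e0 dc IH1 dcov IH2 G1 G2 e; subst; fin.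
    destruct (IH1 (TFun Bop D :: Aop :: G1) G2 eq_refl) as [d1 H1].
    destruct (IH2 G1 G2 eq_refl) as [d2 H2].
    assert (el : clause_lookup (shift_h (S (S (length G1))) h) o = Some (shift_c (S (S (length G1))) c))
      by (rewrite lookup_shift, e0; reflexivity).
    exists (cov_cons o el d1 d2). intros eta b o0. simpl.
    destruct (o0 =? o); intros a k.
    + apply (H1 (eta, a, k) b).
    + apply H2.
Qed.

Lemma weaken_closed (L : Logic) v T (dv : has_v (lmodels L) [] v T) :
  forall G, {d' : has_v (lmodels L) G v T | forall eta, den_v d' eta = den_v dv tt}.
Proof.
  induction G as [|B G IH].
  - exists dv. intros []; reflexivity.
  - destruct IH as [d1 H1].
    destruct (weak_v L B _ _ _ d1 [] G eq_refl) as [d2 H2]. simpl in d2, H2.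
    pose proof (@closed_v _ _ _ _ dv 0 (le_n 0)) as Hc.
    revert d2 H2. rewrite Hc. intros d2 H2.
    exists d2. intros [eta b]. exact (eq_trans (H2 eta b) (H1 eta)).
Qed.

Lemma subst_var_neq k u n : n <> k -> subst_v k u (VVar n) = VVar (if n <? k then n else pred n).
Proof.
  intros H. simpl. destruct (n <? k); [reflexivity|].
  rewrite (proj2 (Nat.eqb_neq _ _) H). reflexivity.
Qed.

Lemma subst_var_eq k u : subst_v k u (VVar k) = u.
Proof. simpl. rewrite Nat.ltb_irrefl, Nat.eqb_refl. reflexivity. Qed.


Definition Sv (L : Logic) T v (dv : has_v (lmodels L) [] v T) G w A (d : has_v (lmodels L) G w A) : Type :=
  forall G1 G2 (e : G = G1 ++ T :: G2),
  {d' : has_v (lmodels L) (G1 ++ G2) (subst_v (length G1) v w) A |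
    forall eta, den_v d' eta = den_v d (eq_rect_r sem_ctx (ins G1 G2 T eta (den_v dv tt)) e)}.
Definition Sc (L : Logic) T v (dv : has_v (lmodels L) [] v T) G c C (d : has_c (lmodels L) G c C) : Type :=
  forall G1 G2 (e : G = G1 ++ T :: G2),
  {d' : has_c (lmodels L) (G1 ++ G2) (subst_c (length G1) v c) C |
    forall eta, den_c d' eta = den_c d (eq_rect_r sem_ctx (ins G1 G2 T eta (den_v dv tt)) e)}.
Definition Sh (L : Logic) T v (dv : has_v (lmodels L) [] v T) G h Sg D (d : cover (lmodels L) G h Sg D) : Type :=
  forall G1 G2 (e : G = G1 ++ T :: G2),
  {d' : cover (lmodels L) (G1 ++ G2) (subst_h (Datatypes.S (Datatypes.S (length G1))) v h) Sg D |
    forall eta o a k, den_h d' eta o a k = den_h d (eq_rect_r sem_ctx (ins G1 G2 T eta (den_v dv tt)) e) o a k}.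

Lemma subst_all (L : Logic) T v (dv : has_v (lmodels L) [] v T) :
  forall G c C (d : has_c (lmodels L) G c C), Sc L T v dv G c C d.
Proof.
  assert (hcl : forall k, shift_v k v = v) by (intro k; apply (@closed_v _ _ _ _ dv); simpl; lia).
  apply (has_c_rect' (lmodels L) (Sv L T v dv) (Sc L T v dv) (Sh L T v dv)); unfold Sv, Sc, Sh.
  - intros G n A x G1 G2 e; subst.
    destruct (var_subst G1 G2 T _ _ x) as [[e [Hn Hd]] | [m [y [Hn [Hm Hd]]]]].
    + subst n. subst A. rewrite subst_var_eq.
      destruct (weaken_closed L v T dv (G1 ++ G2)) as [d1 H1].
      exists d1. intros eta. rewrite H1. fin. rewrite Hd. reflexivity.
    + rewrite (subst_var_neq _ _ _ Hn), <- Hm.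
      exists (tv_var _ y). intros eta. fin. rewrite Hd. reflexivity.
  - intros G G1 G2 e; subst; fin. exists (tv_unit _ _); reflexivity.
  - intros G G1 G2 e; subst; fin. exists (tv_true _ _); reflexivity.
  - intros G G1 G2 e; subst; fin. exists (tv_false _ _); reflexivity.
  - intros G c A C dc IH G1 G2 e; subst; fin. rewrite !hcl.
    destruct (IH (A :: G1) G2 eq_refl) as [d1 H1]. exists (tv_fun d1). intros eta.
    simpl. apply functional_extensionality. intro a. apply (H1 (eta, a)).
  - intros G cr h A Sg E D dcr IH1 dcov IH2 nd0 inc0 l G1 G2 e; subst; fin.
    pose proof (@lmodels_subst L G1 G2 T v h E Sg D dv l) as mw.
    unfold subst_clauses in mw. rewrite !hcl in mw |- *.
    destruct (IH1 (A :: G1) G2 eq_refl) as [d1 H1]. destruct (IH2 G1 G2 eq_refl) as [d2 H2].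
    assert (nd : NoDup (clause_names (subst_h (S (S (length G1))) v h))) by (rewrite names_subst; auto).
    assert (inc : forall o, In o (clause_names (subst_h (S (S (length G1))) v h)) -> In o (sig_names Sg))
      by (rewrite names_subst; auto).
    exists (tv_handler E d1 d2 nd inc mw). intros eta. simpl. f_equal.
    + apply functional_extensionality. intro a. apply (H1 (eta, a)).
    + apply functional_extensionality_dep; intro o.
      apply functional_extensionality; intro a.
      apply functional_extensionality; intro k. apply H2.
  - intros G w c1 c2 C dv0 IH dc1 IH1 dc2 IH2 G1 G2 e; subst; fin.
    destruct (IH G1 G2 eq_refl) as [d1 H1]. destruct (IH1 G1 G2 eq_refl) as [d2 H2].
    destruct (IH2 G1 G2 eq_refl) as [d3 H3].
    exists (tc_if d1 d2 d3). intros eta. simpl. rewrite H1, H2, H3. reflexivity.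
  - intros G v1 v2 A C dv1 IH1 dv2 IH2 G1 G2 e; subst; fin.
    destruct (IH1 G1 G2 eq_refl) as [d1 H1]. destruct (IH2 G1 G2 eq_refl) as [d2 H2].
    exists (tc_app d1 d2). intros eta. simpl. rewrite H1, H2. reflexivity.
  - intros G w A Sg E dw IH G1 G2 e; subst; fin.
    destruct (IH G1 G2 eq_refl) as [d1 H1].
    exists (tc_ret Sg E d1). intros eta. simpl. rewrite H1. reflexivity.
  - intros G o w c Aop Bop A Sg E s dw IH1 dc IH2 G1 G2 e; subst; fin. rewrite !hcl.
    destruct (IH1 G1 G2 eq_refl) as [d1 H1]. destruct (IH2 (Bop :: G1) G2 eq_refl) as [d2 H2].
    exists (tc_op s d1 d2). intros eta. simpl. rewrite H1. f_equal.
    apply functional_extensionality. intro r. apply (H2 (eta, _)).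
  - intros G c1 c2 A B0 Sg E dc1 IH1 dc2 IH2 G1 G2 e; subst; fin. rewrite !hcl.
    destruct (IH1 G1 G2 eq_refl) as [d1 H1]. destruct (IH2 (A :: G1) G2 eq_refl) as [d2 H2].
    exists (tc_do d1 d2). intros eta. simpl. rewrite H1. f_equal.
    apply functional_extensionality. intro r. apply (H2 (eta, _)).
  - intros G w c C D dw IH1 dc IH2 G1 G2 e; subst; fin.
    destruct (IH1 G1 G2 eq_refl) as [d1 H1]. destruct (IH2 G1 G2 eq_refl) as [d2 H2].
    exists (tc_with d1 d2). intros eta. simpl. rewrite H1, H2. reflexivity.
  - intros G h D G1 G2 e; subst; fin.
    exists (cov_nil _ _ _ _). intros. destruct a.
  - intros G h o Aop Bop Sg D c e0 dc IH1 dcov IH2 G1 G2 e; subst; fin.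
    destruct (IH1 (TFun Bop D :: Aop :: G1) G2 eq_refl) as [d1 H1].
    destruct (IH2 G1 G2 eq_refl) as [d2 H2].
    simpl in d1.
    assert (el : clause_lookup (subst_h (S (S (length G1))) v h) o = Some (subst_c (S (S (length G1))) v c))
      by (rewrite lookup_subst, e0; reflexivity).
    exists (cov_cons o el d1 d2). intros eta o0. simpl.
    destruct (o0 =? o); intros a k.
    + apply (H1 (eta, a, k)).
    + apply H2.
Qed.

Lemma cover_find (L : Logic) G h Sg D (cv : cover (lmodels L) G h Sg D) o A B (p : sig_has Sg o A B) :
  {c & {dc : has_c (lmodels L) (TFun B D :: A :: G) c D |
    clause_lookup h o = Some c /\
    forall eta a (K : sem_v B -> sem_c D),
      den_h cv eta o (arg_in p a) (fun r => K (res_out p r)) = den_c dc ((eta, a), K)}}.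
Proof.
  revert cv; induction p; intros cv; dependent destruction cv.
  - exists c, h0. split; auto. intros eta a K. simpl.
    generalize (Nat.eqb_refl o). generalize (Nat.eqb o o). intros b e1. subst b.
    reflexivity.
  - destruct (IHp cv) as [c1 [dc1 [Hl Hd]]].
    exists c1, dc1. split; auto. intros eta a K. simpl.
    rewrite <- Hd. revert e. generalize (Nat.eqb o o'). intros b e. subst b.
    reflexivity.
Qed.

Theorem proposition6 (L : Logic) (c c' : comp) (C : ctype)
  (d : has_c (lmodels L) [] c C) :
  step c c' ->
  exists d' : has_c (lmodels L) [] c' C,
    den_c d tt = den_c d' tt.
Proof.
  intros Hs. revert C d. induction Hs; intros C d.
  all: dependent destruction d.
  - dependent destruction h. exists d1. reflexivity.
  - dependent destruction h. exists d2. reflexivity.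
  - dependent destruction h.
    destruct (subst_all L A v h0 _ _ _ h [] [] eq_refl) as [d' Hd].
    exists d'. exact (eq_sym (Hd tt)).
  - destruct (IHHs _ d1) as [d1' H1]. exists (tc_do d1' d2). simpl. rewrite H1. reflexivity.
  - dependent destruction d1.
    destruct (subst_all L A v h _ _ _ d2 [] [] eq_refl) as [d' Hd].
    exists d'. exact (eq_sym (Hd tt)).
  - dependent destruction d1.
    destruct (weak_all L Bop _ _ _ d2 [A] [] eq_refl) as [d2w H2].
    exists (tc_op s h (tc_do d1 d2w)). simpl. f_equal.
    apply functional_extensionality; intro r. f_equal.
    apply functional_extensionality; intro x. exact (eq_sym (H2 (tt, x) (res_out s r))).
  - destruct (IHHs _ d) as [d' H']. exists (tc_with h d'). simpl. rewrite H'. reflexivity.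
  - dependent destruction h0. dependent destruction d.
    destruct (subst_all L A v h0 _ _ _ h2 [] [] eq_refl) as [d' Hd].
    exists d'. exact (eq_sym (Hd tt)).
  - dependent destruction h0. dependent destruction d.
    destruct (cover_find L _ _ _ _ c0 _ _ _ s) as [c1 [dc0 [Hl Hd]]].
    pose proof (clause_in_lookup _ _ _ H n) as Hl'. rewrite Hl in Hl'. injection Hl' as ->.
    set (HV := tv_handler E h2 c0 n i l).
    rewrite (@closed_v _ _ _ _ HV 0 (le_n 0)).
    destruct (weaken_closed L _ _ HV [Bop]) as [HV' HVe].
    set (KV := tv_fun (tc_with HV' d)).
    rewrite (@closed_v _ _ _ _ KV 0 (le_n 0)).
    destruct (subst_all L _ _ KV _ _ _ dc0 [] [Aop] eq_refl) as [d1 H1].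
    destruct (subst_all L _ _ h0 _ _ _ d1 [] [] eq_refl) as [d2 H2].
    exists d2.
    transitivity (den_c dc0 ((tt, den_v h0 tt), den_v KV tt)).
    + simpl. rewrite (Hd tt (den_v h0 tt) (fun y => lift (fun a => den_c h2 (tt, a)) (den_h c0 tt) (den_c d (tt, y)))).
      f_equal. f_equal. apply functional_extensionality; intro y. simpl. rewrite HVe. reflexivity.
    + symmetry. etransitivity. apply (H2 tt). unfold eq_rect_r; simpl. apply H1.
Qed.
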